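(* Let $V$ be a finite-dimensional real representation of $\mathbb Z/3$, and write $V\cong m\mathbf 1\oplus n\mathbf 2$. Then $V$ has a basis that is $\mathbb Z/3$-invariant up to sign if and only if $m\ge n$.
   Context: $\mathbf 1$ denotes the trivial one-dimensional real representation of $\mathbb Z/3$ and $\mathbf 2$ the two-dimensional real representation in which a generator acts by rotation by $120^\circ$; every finite-dimensional real $\mathbb Z/3$-representation is isomorphic to $m\mathbf 1\oplus n\mathbf 2$ for unique $m,n\ge0$. A basis is $G$-invariant up to sign if every $g\in G$ maps every basis element to plus or minus a basis element. *)

(* Defs.v *)
From HB Require Import structures.
From mathcomp Require Import all_boot all_order all_algebra.
From mathcomp Require Import reals.
Set Implicit Arguments. Unset Strict Implicit. Unset Printing Implicit Defensive.
Import Order.TTheory GRing.Theory Num.Theory.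
Local Open Scope ring_scope.

(* Vectors of V = R^d are row vectors; the generator of Z/3 acts by v |-> v *m g,
   so the element k of Z/3 (k = 0,1,2) acts by v |-> v *m g ^+ k. *)

Definition rot120 (R : rcfType) : 'M[R]_2 :=
  \matrix_(i < 2, j < 2)
    (if i == j then - (1 / 2%:R)
     else if (i : nat) == 1%N then Num.sqrt 3%:R / 2%:R
     else - (Num.sqrt 3%:R / 2%:R)).

Definition rotdiag (R : rcfType) (n : nat) : 'M[R]_(2 * n) :=
  \matrix_(i < 2 * n, j < 2 * n)
    (if (i %/ 2 == j %/ 2)%N
     then rot120 R (inord (i %% 2)) (inord (j %% 2)) else 0).

(* the standard model of m1 (+) n2 : generator acts by diag(1_m, rot120, ..., rot120) *)
Definition stdrep (R : rcfType) (m n : nat) : 'M[R]_(m + 2 * n) :=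
  block_mx 1%:M 0 0 (rotdiag R n).

Definition inv_up_to_sign_basis (R : rcfType) (d : nat) (g B : 'M[R]_d) : Prop :=
  B \in unitmx /\
  forall (k : 'I_3) (i : 'I_d), exists (j : 'I_d) (s : bool),
    row i B *m g ^+ k = (-1) ^+ s *: row j B.

(* Main.v *)
Require Import Defs.
From HB Require Import structures.
From mathcomp Require Import all_boot all_order all_algebra.
From mathcomp Require Import reals zify ring lra.
Import Order.TTheory GRing.Theory Num.Theory.
Set Implicit Arguments. Unset Strict Implicit. Unset Printing Implicit Defensive.
Local Open Scope ring_scope.

Definition mkv (R : rcfType) (a b : R) : 'rV[R]_2 :=
  \row_(j < 2) (if (j : nat) == 0%N then a else b).

Lemma sqrt3_sq (R : rcfType) : Num.sqrt (3%:R : R) ^+ 2 = 3%:R.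
Proof. by rewrite sqr_sqrtr // ler0n. Qed.

Lemma sqrt3_neq0 (R : rcfType) : Num.sqrt (3%:R : R) != 0.
Proof. by rewrite sqrtr_eq0 -ltNge ltr0n. Qed.

Lemma mul2E (R : rcfType) (x : 'rV[R]_2) (A : 'M[R]_2) :
  x *m A = mkv (x 0 0 * A 0 0 + x 0 1 * A 1 0) (x 0 0 * A 0 1 + x 0 1 * A 1 1).
Proof.
apply/rowP => j; rewrite !mxE !big_ord_recl big_ord0 addr0.
case: j => [[|[|//]] ?] /=.
- by congr (x 0 _ * A _ _ + x 0 _ * A _ _); apply: val_inj.
- by congr (x 0 _ * A _ _ + x 0 _ * A _ _); apply: val_inj.
Qed.

Lemma mkv_eq (R : rcfType) (a b c d : R) : a = c -> b = d -> mkv a b = mkv c d.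
Proof. by move=> -> ->. Qed.

Lemma mkvE0 (R : rcfType) (a b : R) : mkv a b 0 0 = a.
Proof. by rewrite mxE. Qed.
Lemma mkvE1 (R : rcfType) (a b : R) : mkv a b 0 1 = b.
Proof. by rewrite mxE. Qed.

Lemma rotE (R : rcfType) : let s := Num.sqrt (3%:R : R) in
  [/\ rot120 R 0 0 = - (1/2%:R), rot120 R 0 1 = - (s / 2%:R),
      rot120 R 1 0 = s / 2%:R & rot120 R 1 1 = - (1/2%:R)].
Proof. by rewrite /rot120 !mxE. Qed.

Definition u0 (R : rcfType) : 'rV[R]_2 := mkv 1 0.
Definition u1 (R : rcfType) : 'rV[R]_2 := mkv (- (1/2%:R)) (- (Num.sqrt 3%:R / 2%:R)).
Definition u2 (R : rcfType) : 'rV[R]_2 := mkv (- (1/2%:R)) (Num.sqrt 3%:R / 2%:R).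

Lemma u0rot (R : rcfType) : u0 R *m rot120 R = u1 R.
Proof.
case: (rotE R) => a b c d.
rewrite mul2E /u0 /u1 !mkvE0 !mkvE1 a b c d; apply: mkv_eq; ring.
Qed.

Lemma u1rot (R : rcfType) : u1 R *m rot120 R = u2 R.
Proof.
case: (rotE R) => a b c d; have h := sqrt3_sq R.
rewrite mul2E /u2 /u1 !mkvE0 !mkvE1 a b c d; apply: mkv_eq.
  rewrite expr2 in h; nra.
rewrite expr2 in h; nra.
Qed.

Lemma u2rot (R : rcfType) : u2 R *m rot120 R = u0 R.
Proof.
case: (rotE R) => a b c d; have h := sqrt3_sq R.
rewrite mul2E /u2 /u0 !mkvE0 !mkvE1 a b c d; apply: mkv_eq.
  rewrite expr2 in h; nra.
rewrite expr2 in h; nra.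
Qed.


Definition ev (R : rcfType) (m t : nat) : 'rV[R]_m := \row_(j < m) ((j : nat) == t)%:R.
Definition bv (R : rcfType) (n t : nat) (x : 'rV[R]_2) : 'rV[R]_(2 * n) :=
  \row_(c < 2 * n) (if (c %/ 2 == t)%N then x 0 (inord (c %% 2)) else 0).

Lemma bv_lin (R : rcfType) n t (a : R) x y :
  bv n t (a *: x + y) = a *: bv n t x + bv n t y.
Proof.
apply/rowP => c; rewrite !mxE; case: ifP => _; rewrite ?mxE //.
by rewrite mulr0 addr0.
Qed.

Lemma bv0 (R : rcfType) n t : bv n t (0 : 'rV[R]_2) = 0.
Proof. by apply/rowP => c; rewrite !mxE; case: ifP => _; rewrite ?mxE. Qed.

Lemma bvD (R : rcfType) n t (x y : 'rV[R]_2) : bv n t x + bv n t y = bv n t (x + y).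
Proof. by rewrite -[x in RHS]scale1r bv_lin scale1r. Qed.

Lemma bvZ (R : rcfType) n t (a : R) x : a *: bv n t x = bv n t (a *: x).
Proof. by apply/rowP => c; rewrite !mxE; case: ifP => _; rewrite ?mxE ?mulr0. Qed.

Lemma row_rotdiag (R : rcfType) n (i : 'I_(2 * n)) :
  row i (rotdiag R n) = bv n (i %/ 2) (row (inord (i %% 2)) (rot120 R)).
Proof.
apply/rowP => c; rewrite !mxE eq_sym; case: ifP => _; rewrite ?mxE //.
Qed.

Lemma inord_val2 (k : nat) : (k < 2)%N -> nat_of_ord (inord k : 'I_2) = k.
Proof. by move=> h; rewrite inordK. Qed.

Lemma bv_delta (R : rcfType) n t (x : 'rV[R]_2) (h0 : (2 * t < 2 * n)%N)
  (h1 : (2 * t + 1 < 2 * n)%N) :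
  bv n t x = x 0 0 *: 'e_(Ordinal h0) + x 0 1 *: 'e_(Ordinal h1).
Proof.
apply/rowP => c; rewrite !mxE /= -!val_eqE /=.
case: ifP => /eqP hc.
  have [e|e] : (c %% 2 = 0 \/ c %% 2 = 1)%N by lia.
    have -> : (inord (c %% 2) : 'I_2) = 0 by apply/val_inj => /=; rewrite inordK; lia.
    have -> : (c == 2 * t :> nat) by apply/eqP; lia.
    have -> : (c == 2 * t + 1 :> nat) = false by apply/eqP; lia.
    by rewrite mulr1 mulr0 addr0.
  have -> : (inord (c %% 2) : 'I_2) = 1 by apply/val_inj => /=; rewrite inordK; lia.
  have -> : (c == 2 * t :> nat) = false by apply/eqP; lia.
  have -> : (c == 2 * t + 1 :> nat) by apply/eqP; lia.
  by rewrite mulr1 mulr0 add0r.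
have -> : (c == 2 * t :> nat) = false by apply/eqP; lia.
have -> : (c == 2 * t + 1 :> nat) = false by apply/eqP; lia.
by rewrite !mulr0 addr0.
Qed.

Lemma bv_rot (R : rcfType) n t (x : 'rV[R]_2) : (t < n)%N ->
  bv n t x *m rotdiag R n = bv n t (x *m rot120 R).
Proof.
move=> ht.
have h0 : (2 * t < 2 * n)%N by lia.
have h1 : (2 * t + 1 < 2 * n)%N by lia.
rewrite (bv_delta x h0 h1) mulmxDl -!scalemxAl -!rowE !row_rotdiag /=.
have -> : (2 * t %/ 2 = t)%N by lia.
have -> : ((2 * t + 1) %/ 2 = t)%N by lia.
have -> : (inord (2 * t %% 2) : 'I_2) = 0 by apply/val_inj => /=; rewrite inordK; lia.
have -> : (inord ((2 * t + 1) %% 2) : 'I_2) = 1 by apply/val_inj => /=; rewrite inordK; lia.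
rewrite [X in _ + X]bvZ -bv_lin; congr bv.
apply/rowP => j; rewrite !mxE !big_ord_recl big_ord0 addr0 !mxE.
by congr (x 0 _ * _ + x 0 _ * _); apply: val_inj.
Qed.

Definition fv (R : rcfType) (m n i : nat) : 'rV[R]_(m + 2 * n) :=
  if (i < m)%N then row_mx (ev R m i) (if (i < n)%N then bv n i (u0 R) else 0)
  else row_mx (ev R m ((i - m) %/ 2))
              (bv n ((i - m) %/ 2) (if ((i - m) %% 2 == 0)%N then u1 R else u2 R)).

Lemma stdrep_row (R : rcfType) m n (a : 'rV[R]_m) (b : 'rV[R]_(2 * n)) :
  row_mx a b *m stdrep R m n = row_mx a (b *m rotdiag R n).
Proof. by rewrite /stdrep mul_row_block !mulmx0 mulmx1 addr0 add0r. Qed.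

Lemma fv_inv (R : rcfType) m n (i : 'I_(m + 2 * n)) : (n <= m)%N ->
  exists j : 'I_(m + 2 * n), fv R m n i *m stdrep R m n = fv R m n j.
Proof.
move=> hnm; have hi := ltn_ord i.
rewrite /fv; case: ifP => him.
  case: ifP => hin.
    have hj : (m + 2 * i < m + 2 * n)%N by lia.
    exists (Ordinal hj); rewrite /= stdrep_row bv_rot // u0rot.
    have -> : (m + 2 * i < m)%N = false by lia.
    have -> : ((m + 2 * i - m) %/ 2 = i)%N by lia.
    by have -> : ((m + 2 * i - m) %% 2 = 0)%N by lia.
  by exists i; rewrite stdrep_row mul0mx him hin.
have ht : ((i - m) %/ 2 < n)%N by lia.
case: ifP => /eqP hk.
  have hj : (i + 1 < m + 2 * n)%N by lia.
  exists (Ordinal hj); rewrite /= stdrep_row bv_rot // u1rot.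
  have -> : (i + 1 < m)%N = false by lia.
  have -> : ((i + 1 - m) %/ 2 = (i - m) %/ 2)%N by lia.
  by have -> : ((i + 1 - m) %% 2 == 0)%N = false by apply/eqP; lia.
have hj : ((i - m) %/ 2 < m + 2 * n)%N by lia.
exists (Ordinal hj); rewrite /= stdrep_row bv_rot // u2rot.
have -> : ((i - m) %/ 2 < m)%N by lia.
by rewrite ht.
Qed.

Lemma e_left (R : rcfType) m n (i : 'I_(m + 2 * n)) : (i < m)%N ->
  'e_i = row_mx (ev R m i) (0 : 'rV[R]_(2 * n)).
Proof.
move=> h; apply/rowP => c; rewrite !mxE; case: splitP => c' hc /=; rewrite !mxE //=.
  by rewrite -val_eqE /= hc.
rewrite (_ : (c == i) = false) //; apply/negP => /eqP e; rewrite e in hc; clear -h hc; lia. Qed.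

Lemma e_right (R : rcfType) m n (i : 'I_(m + 2 * n)) : (m <= i)%N ->
  'e_i = row_mx (0 : 'rV[R]_m)
     (bv n ((i - m) %/ 2) (mkv ((i - m) %% 2 == 0)%N%:R ((i - m) %% 2 == 1)%N%:R)).
Proof.
move=> h; apply/rowP => c; rewrite !mxE; case: splitP => c' hc /=; rewrite !mxE //=.
  have hc' := ltn_ord c'.
  by rewrite (_ : (c == i) = false) //; apply/negP => /eqP e; rewrite e in hc; lia.
have eqci : (c == i) = (nat_of_ord c == nat_of_ord i).
  by case: eqP => hh; case: eqP => hh' //; [case: hh'; rewrite hh | case: hh; apply: val_inj].
rewrite eqci hc.
case: ifP => [/eqP hq|/negbT/eqP hq].
  rewrite inordK; last lia.
  have E1 : (c' %% 2 = 0 \/ c' %% 2 = 1)%N by lia.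
  have E2 : ((i - m) %% 2 = 0 \/ (i - m) %% 2 = 1)%N by lia.
  case: E1 => e; case: E2 => f; rewrite e f /=; case: eqP => hh //; exfalso; lia.
case: eqP => hh //; exfalso; lia.
Qed.

Lemma u_sum (R : rcfType) : u0 R + u1 R + u2 R = 0.
Proof. by apply/rowP => j; rewrite /u0 /u1 /u2 !mxE; case: ifP => _; lra. Qed.

Lemma u_span (R : rcfType) (y : 'rV[R]_2) :
  y = (y 0 0 - y 0 1 / Num.sqrt 3%:R) *: u0 R
      + (- (2%:R * y 0 1 / Num.sqrt 3%:R)) *: u1 R.
Proof.
have hs := sqrt3_neq0 R.
apply/rowP => j; rewrite !mxE; case: j => [[|[|//]] ?] /=.
  by rewrite (_ : Ordinal _ = 0); [field | apply: val_inj].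
by rewrite (_ : Ordinal _ = 1); [field | apply: val_inj].
Qed.

Lemma third (R : rcfType) (k : nat) (p : 'rV[R]_k) : (3%:R)^-1 *: (p + p + p) = p.
Proof.
rewrite -{1 2 3}[p]scale1r -!scalerDl scalerA.
by rewrite (_ : _ * _ = 1) ?scale1r //; field.
Qed.

Lemma gen_span (R : rcfType) m n k (W : 'M[R]_(k, m + 2 * n)) (p : 'rV[R]_m) t :
  (row_mx p (bv n t (u0 R)) <= W)%MS -> (row_mx p (bv n t (u1 R)) <= W)%MS ->
  (row_mx p (bv n t (u2 R)) <= W)%MS ->
  (row_mx p 0 <= W)%MS /\ forall y, (row_mx 0 (bv n t y) <= W)%MS.
Proof.
move=> h0 h1 h2.
have hp : (row_mx p 0 <= W)%MS.
  have -> : row_mx p 0 = (3%:R)^-1 *: (row_mx p (bv n t (u0 R)) +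
       row_mx p (bv n t (u1 R)) + row_mx p (bv n t (u2 R))).
    rewrite !add_row_mx scale_row_mx third.
    by rewrite !bvD u_sum bv0 scaler0.
  by rewrite scalemx_sub // !addmx_sub.
have hq : forall x, (row_mx p (bv n t x) <= W)%MS -> (row_mx 0 (bv n t x) <= W)%MS.
  move=> x hx.
  have -> : row_mx 0 (bv n t x) = row_mx p (bv n t x) + (-1) *: row_mx p 0.
    by rewrite scale_row_mx add_row_mx scaler0 addr0 scaleN1r subrr.
  by apply: addmx_sub => //; apply: scalemx_sub.
split=> // y.
rewrite (u_span y) bv_lin -bvZ.
have rD : forall a b : 'rV[R]_(2 * n), row_mx (0 : 'rV[R]_m) (a + b) = row_mx 0 a + row_mx 0 b.
  by move=> a b; rewrite add_row_mx addr0.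
have rZ : forall (c : R) (a : 'rV[R]_(2 * n)), row_mx (0 : 'rV[R]_m) (c *: a) = c *: row_mx 0 a.
  by move=> c a; rewrite scale_row_mx scaler0.
rewrite rD !rZ.
by apply: addmx_sub; apply: scalemx_sub; apply: hq.
Qed.

Lemma B0_unit (R : rcfType) m n : (n <= m)%N ->
  (\matrix_(i < m + 2 * n) fv R m n i) \in unitmx.
Proof.
move=> hnm.
rewrite -row_full_unit -sub1mx; apply/row_subP => i; rewrite row1.
set W := \matrix_(i < m + 2 * n) fv R m n i.
have hf : forall j (hj : (j < m + 2 * n)%N), (fv R m n j <= W)%MS.
  move=> j hj; rewrite -[fv R m n j]/(fv R m n (Ordinal hj)).
  by rewrite -(rowK (fun i : 'I_(m + 2 * n) => fv R m n i) (Ordinal hj)) row_sub.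
have key : forall t, (t < n)%N ->
    (row_mx (ev R m t) 0 <= W)%MS /\ forall y, (row_mx 0 (bv n t y) <= W)%MS.
  move=> t ht; apply: gen_span.
  - have hj : (t < m + 2 * n)%N by lia.
    have := hf t hj; rewrite /fv.
    have -> : (t < m)%N by lia.
    by rewrite ht.
  - have hj : (m + 2 * t < m + 2 * n)%N by lia.
    have := hf _ hj; rewrite /fv.
    have -> : (m + 2 * t < m)%N = false by lia.
    have -> : ((m + 2 * t - m) %/ 2 = t)%N by lia.
    by have -> : ((m + 2 * t - m) %% 2 = 0)%N by lia.
  - have hj : (m + 2 * t + 1 < m + 2 * n)%N by lia.
    have := hf _ hj; rewrite /fv.
    have -> : (m + 2 * t + 1 < m)%N = false by lia.
    have -> : ((m + 2 * t + 1 - m) %/ 2 = t)%N by lia.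
    by have -> : ((m + 2 * t + 1 - m) %% 2 == 0)%N = false by apply/eqP; lia.
have hi := ltn_ord i.
case: (ltnP i m) => him.
  rewrite (e_left R him).
  case: (ltnP i n) => hin; first by case: (key _ hin).
  have := hf i hi; rewrite /fv him.
  by have -> : (i < n)%N = false by lia.
rewrite (e_right R him).
have ht : ((i - m) %/ 2 < n)%N by lia.
by case: (key _ ht).
Qed.

Lemma trace_std (R : rcfType) m n : \tr (stdrep R m n) = m%:R - n%:R.
Proof.
rewrite /stdrep mxtrace_block mxtrace1.
have -> : \tr (rotdiag R n) = \sum_(i < 2 * n) (- (1 / 2%:R) : R).
  by apply: eq_bigr => i _; rewrite !mxE eqxx /= eqxx.
have h2 : (- (1 / 2%:R) : R) *+ 2 = -1 by rewrite -mulr_natr; field.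
by rewrite sumr_const card_ord mulrnA h2 mulNrn.
Qed.

Theorem proposition2p21 (R : realType) (m n : nat) (g : 'M[R]_(m + 2 * n))
  (hrep : g ^+ 3 = 1%:M)
  (hiso : exists P : 'M[R]_(m + 2 * n),
            P \in unitmx /\ g = invmx P *m stdrep R m n *m P) :
  (exists B : 'M[R]_(m + 2 * n), inv_up_to_sign_basis g B) <-> (n <= m)%N.
Proof.
case: hiso => P [hP hg].
split.
  case=> B [hB hinv].
  have htr : \tr g = m%:R - n%:R.
    by rewrite hg mxtrace_mulC mulmxA mulmxV // mul1mx trace_std.
  have : 0 <= \tr g.
    have -> : \tr g = \tr (B *m g *m invmx B).
      by rewrite mxtrace_mulC mulmxA mulVmx // mul1mx.
    apply: sumr_ge0 => i _.
    have := hinv (inord 1) i; rewrite inordK // expr1 => -[j [s hs]].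
    have E : (B *m g *m invmx B) i i = (row i B *m g *m invmx B) 0 i.
      by rewrite -!row_mul [RHS]mxE.
    rewrite E hs -scalemxAl -row_mul mulmxV // row1 !mxE eqxx /=.
    case: (eqVneq i j) => [eij|nij]; last by rewrite mulr0.
    subst j.
    case: s hs => hs; last by rewrite expr0 mul1r.
    exfalso.
    have h3 : row i B *m g ^+ 3 = - row i B.
      rewrite !exprS expr0 mulr1 -!mulmxE !mulmxA hs expr1.
      by rewrite !scaleN1r !mulNmx hs scaleN1r mulNmx opprK hs scaleN1r.
    rewrite hrep mulmx1 in h3.
    have h0 : row i B = 0.
      have : row i B + row i B = 0 by rewrite {1}h3 addNr.
      by rewrite -mulr2n -scaler_nat => /eqP; rewrite scaler_eq0 pnatr_eq0 /= => /eqP.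
    have : row i (B *m invmx B) 0 i = 0 by rewrite row_mul h0 mul0mx mxE.
    by rewrite mulmxV // row1 !mxE !eqxx /=; apply/eqP; rewrite oner_eq0.
  by rewrite htr subr_ge0 ler_nat.
move=> hnm.
set B0 := \matrix_(i < m + 2 * n) fv R m n i.
exists (B0 *m P); split; first by rewrite unitmx_mul B0_unit.
have step : forall i, exists j, row i (B0 *m P) *m g = row j (B0 *m P).
  move=> i; have [j hj] := fv_inv R i hnm.
  exists j; rewrite !row_mul !rowK hg !mulmxA.
  by rewrite -(mulmxA (fv R m n i) P) mulmxV // mulmx1 hj.
have pw : forall k i, exists j, row i (B0 *m P) *m g ^+ k = row j (B0 *m P).
  elim=> [|k IH] i; first by exists i; rewrite expr0 mulmx1.
  have [j hj] := IH i; have [j' hj'] := step j.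
  by exists j'; rewrite exprSr -mulmxE mulmxA hj hj'.
move=> k i; have [j hj] := pw k i.
by exists j, false; rewrite expr0 scale1r.
Qed.
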